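(* In the pure Call-by-Name $\lambda$-calculus with observation $\mathrm{obs}(M)={\downarrow}\{\omega(M)\}$ (as in the context), the parallel reduction $\rightsquigarrow_{pd}$ is an $\mathrm{obs}$-normalizing (multi-step) strategy for $\to_\beta$, and for every term $M$, $M\rightsquigarrow_{pd}^{\mathrm{obs}}\mathrm{BT}(M)$.
   Context: Pure $\lambda$-terms $M::=x\mid\lambda x.M\mid MM$; $\to_\beta$ is the closure of $(\lambda x.M)N\mapsto M\{N/x\}$ under all contexts. Head reduction $\to_h$ is the closure of $\beta$ under head contexts $H::=[\,]\mid\lambda x.H\mid HM$. Parallel reduction $\rightsquigarrow_{pd}$: if $M\to_hM'$ then $M\rightsquigarrow_{pd}M'$; if $M$ is $\beta$-normal then $M\rightsquigarrow_{pd}M$; otherwise ($M$ $\to_h$-normal but not $\beta$-normal) $\lambda x.P\rightsquigarrow_{pd}\lambda x.P'$ if $P\rightsquigarrow_{pd}P'$, and $P_1P_2\rightsquigarrow_{pd}P_1'P_2'$ if $P_1\rightsquigarrow_{pd}P_1'$ and $P_2\rightsquigarrow_{pd}P_2'$. Partial terms $P::=\Omega\mid x\mid PP\mid\lambda x.P$, preordered by the least reflexive-transitive relation $\le$ with $\Omega\le P$, $P_1P_2\le P_1'P_2'$ if $P_i\le P_i'$, $\lambda x.P\le\lambda x.P'$ if $P\le P'$. $\mathrm{PNF}$: $\Omega\in\mathrm{PNF}$, and $\lambda x_1\dots x_n.xA_1\dots A_m\in\mathrm{PNF}$ if all $A_i\in\mathrm{PNF}$. $\omega(M)=\Omega$ if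 $M$ is not a head normal form (a term $\lambda\vec x.xM_1\dots M_p$), and $\omega(\lambda\vec x.xM_1\dots M_p)=\lambda\vec x.x\,\omega(M_1)\dots\omega(M_p)$. ${\downarrow}\mathcal S=\{Q\in\mathrm{PNF}\mid Q\le S\text{ for some }S\in\mathcal S\}$; $\mathrm{BT}(M)=\bigcup_{M\to_\beta^*N}{\downarrow}\{\omega(N)\}$. $\mathrm{obs}$ takes values in the ideal completion of $\mathrm{PNF}$ (ordered by inclusion, suprema of chains are unions). For a relation $R$, $M\,R^{\mathrm{obs}}\,\mathbf r$ means there is a maximal $R$-sequence $(M_n)_n$ from $M$ (infinite, or finite ending in an $R$-normal term then continued constantly) with $\bigcup_n\mathrm{obs}(M_n)=\mathbf r$; $\mathrm{Lim}(M,R)$ is the set of such $\mathbf r$. A relation $R'$ is $\mathrm{obs}$-normalizing for $R$ if it is asymptotically complete (for all $M$, $M R^{\mathrm{obs}}\mathbf q$ implies $M R'^{\mathrm{obs}}\mathbf p$ for some $\mathbf p\supseteq\mathbf q$) and asymptotically uniform (for all $M$, every element of $\mathrm{Lim}(M,R')$ is maximal in $\mathrm{Lim}(M,R')$). *)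

(* Defs.v *)
From Stdlib Require Import Arith Relations.

Inductive term : Type :=
| Var : nat -> term
| Lam : term -> term
| App : term -> term -> term.

Fixpoint lift (n c : nat) (t : term) : term :=
  match t with
  | Var i => if Nat.leb c i then Var (i + n) else Var i
  | Lam t' => Lam (lift n (S c) t')
  | App t1 t2 => App (lift n c t1) (lift n c t2)
  end.

Fixpoint subst (k : nat) (u : term) (t : term) : term :=
  match t with
  | Var i => if Nat.eqb i k then lift k 0 u
             else if Nat.ltb k i then Var (pred i) else Var i
  | Lam t' => Lam (subst (S k) u t')
  | App t1 t2 => App (subst k u t1) (subst k u t2)
  end.

Inductive beta : term -> term -> Prop :=
| beta_root : forall M N, beta (App (Lam M) N) (subst 0 N M)
| beta_lam : forall M M', beta M M' -> beta (Lam M) (Lam M')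
| beta_appl : forall M M' N, beta M M' -> beta (App M N) (App M' N)
| beta_appr : forall M N N', beta N N' -> beta (App M N) (App M N').

Inductive hred : term -> term -> Prop :=
| hred_root : forall M N, hred (App (Lam M) N) (subst 0 N M)
| hred_lam : forall M M', hred M M' -> hred (Lam M) (Lam M')
| hred_appl : forall M M' N, hred M M' -> hred (App M N) (App M' N).

Definition normal (R : term -> term -> Prop) (M : term) : Prop :=
  ~ exists N, R M N.

Inductive pd : term -> term -> Prop :=
| pd_head : forall M M', hred M M' -> pd M M'
| pd_nf : forall M, normal beta M -> pd M M
| pd_lam : forall P P',
    normal hred (Lam P) -> ~ normal beta (Lam P) ->
    pd P P' -> pd (Lam P) (Lam P')
| pd_app : forall P1 P2 P1' P2',
    normal hred (App P1 P2) -> ~ normal beta (App P1 P2) ->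
    pd P1 P1' -> pd P2 P2' -> pd (App P1 P2) (App P1' P2').

Inductive pterm : Type :=
| POmega : pterm
| PVar : nat -> pterm
| PApp : pterm -> pterm -> pterm
| PLam : pterm -> pterm.

Inductive ple : pterm -> pterm -> Prop :=
| ple_refl : forall P, ple P P
| ple_trans : forall P Q S, ple P Q -> ple Q S -> ple P S
| ple_omega : forall P, ple POmega P
| ple_app : forall P1 P2 P1' P2', ple P1 P1' -> ple P2 P2' ->
    ple (PApp P1 P2) (PApp P1' P2')
| ple_lam : forall P P', ple P P' -> ple (PLam P) (PLam P').

(* PNF: Omega, and \x1..xn. x A1 .. Am with all Ai in PNF *)
Inductive pnf_neutral : pterm -> Prop :=
| pn_var : forall x, pnf_neutral (PVar x)
| pn_app : forall P A, pnf_neutral P -> pnf P -> pnf_neutral (PApp P A)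
with pnf_lams : pterm -> Prop :=
| pl_base : forall P, pnf_neutral P -> pnf_lams P
| pl_lam : forall P, pnf_lams P -> pnf_lams (PLam P)
with pnf : pterm -> Prop :=
| pnf_omega : pnf POmega
| pnf_hnf : forall P, pnf_lams P -> pnf P.

Fixpoint is_neutral (M : term) : bool :=
  match M with
  | Var _ => true
  | App M1 _ => is_neutral M1
  | Lam _ => false
  end.

Fixpoint is_hnf (M : term) : bool :=
  match M with
  | Lam M' => is_hnf M'
  | _ => is_neutral M
  end.

Fixpoint omega (M : term) : pterm :=
  match M with
  | Var x => PVar x
  | App M1 M2 => if is_neutral M1 then PApp (omega M1) (omega M2) else POmega
  | Lam M' => if is_hnf M' then PLam (omega M') else POmega
  end.

Definition pset := pterm -> Prop.

Definition subset (p q : pset) : Prop := forall Q, p Q -> q Q.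

Definition obs (M : term) : pset := fun Q => pnf Q /\ ple Q (omega M).

Definition BT (M : term) : pset :=
  fun Q => exists N, clos_refl_trans term beta M N /\ pnf Q /\ ple Q (omega N).

(* maximal R-sequence from M (finite ones are continued constantly
   after the R-normal last term) *)
Definition max_seq (R : term -> term -> Prop) (M : term) (f : nat -> term) : Prop :=
  f 0 = M /\
  forall n, R (f n) (f (S n)) \/ (normal R (f n) /\ f (S n) = f n).

Definition obs_lim (R : term -> term -> Prop) (M : term) (r : pset) : Prop :=
  exists f, max_seq R M f /\ (forall Q, r Q <-> exists n, obs (f n) Q).

Definition asymptotically_complete (R' R : term -> term -> Prop) : Prop :=
  forall M q, obs_lim R M q -> exists p, obs_lim R' M p /\ subset q p.

Definition asymptotically_uniform (R' : term -> term -> Prop) : Prop :=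
  forall M p, obs_lim R' M p ->
    forall r, obs_lim R' M r -> subset p r -> subset r p.

Definition obs_normalizing (R' R : term -> term -> Prop) : Prop :=
  asymptotically_complete R' R /\ asymptotically_uniform R'.

Definition multistep_strategy (R' R : term -> term -> Prop) : Prop :=
  forall M N, R' M N -> clos_refl_trans term R M N.

(* Main.v *)
Require Import Defs.
From Stdlib Require Import Arith Relations Lia Classical IndefiniteDescription.

Ltac cmp := repeat match goal with
 | |- context [Nat.leb ?a ?b] => destruct (Nat.leb_spec a b)
 | |- context [Nat.eqb ?a ?b] => destruct (Nat.eqb_spec a b)
 | |- context [Nat.ltb ?a ?b] => destruct (Nat.ltb_spec a b)
 end.
Ltac vsolve := repeat (cbn [lift subst]; cmp); try (exfalso; lia); try reflexivity; try (f_equal; lia).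

Lemma lift_lift : forall u n m c p, p <= c ->
  lift n (m + c) (lift m p u) = lift m p (lift n c u).
Proof.
  induction u as [i|u IHu|u1 IHu1 u2 IHu2]; intros; cbn [lift subst].
  - vsolve.
  - f_equal. rewrite <- Nat.add_succ_r. apply IHu. lia.
  - f_equal; auto.
Qed.

Lemma lift_fuse : forall u n m c p, c <= p -> p <= c + m ->
  lift n p (lift m c u) = lift (n + m) c u.
Proof.
  induction u as [i|u IHu|u1 IHu1 u2 IHu2]; intros; cbn [lift subst].
  - vsolve.
  - f_equal. apply IHu; lia.
  - f_equal; auto.
Qed.

Lemma lift_subst : forall t k c u n,
  lift n (k + c) (subst k u t) = subst k (lift n c u) (lift n (S (k + c)) t).
Proof.
  induction t as [i|t IHt|t1 IHt1 t2 IHt2]; intros; cbn [lift subst].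
  - repeat (cbn [lift subst]; cmp); try (exfalso; lia); try (f_equal; lia); try reflexivity.
    subst; first [pose proof (lift_lift u n i c 0) as HH | pose proof (lift_lift u n k c 0) as HH]; rewrite HH by lia; reflexivity.
  - f_equal. apply (IHt (S k)).
  - f_equal; auto.
Qed.

Lemma subst_lift_comm : forall N j k c u, c <= k ->
  subst (j + k) u (lift j c N) = lift j c (subst k u N).
Proof.
  induction N as [i|N IHN|N1 IHN1 N2 IHN2]; intros; cbn [lift subst].
  - repeat (cbn [lift subst]; cmp); try (exfalso; lia); try (f_equal; lia); try reflexivity.
    all: try (subst; rewrite lift_fuse by lia; f_equal; lia).
    all: vsolve.
  - f_equal. rewrite <- Nat.add_succ_r. apply IHN. lia.
  - f_equal; auto.
Qed.

Lemma subst_lift_cancel : forall u j w m c, c <= j -> j <= c + m ->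
  subst j w (lift (S m) c u) = lift m c u.
Proof.
  induction u as [i|u IHu|u1 IHu1 u2 IHu2]; intros; cbn [lift subst].
  - vsolve.
  - f_equal. apply IHu; lia.
  - f_equal; auto.
Qed.

Lemma subst_subst : forall M j k u N,
  subst (j + k) u (subst j N M) = subst j (subst k u N) (subst (S (j + k)) u M).
Proof.
  induction M as [i|M IHM|M1 IHM1 M2 IHM2]; intros; cbn [lift subst].
  - repeat (cbn [lift subst]; cmp); try (exfalso; lia); try (f_equal; lia); try reflexivity.
    all: try (subst; apply subst_lift_comm; lia).
    all: try (subst; symmetry; apply subst_lift_cancel; lia).
    all: try (subst; rewrite subst_lift_cancel by lia; f_equal; lia).
    all: vsolve.
  - f_equal. apply (IHM (S j)).
  - f_equal; auto.
Qed.

Inductive par : term -> term -> Prop :=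
| par_var : forall i, par (Var i) (Var i)
| par_lam : forall A A', par A A' -> par (Lam A) (Lam A')
| par_app : forall A A' B B', par A A' -> par B B' -> par (App A B) (App A' B')
| par_beta : forall A A' B B', par A A' -> par B B' -> par (App (Lam A) B) (subst 0 B' A').

Inductive whr : term -> term -> Prop :=
| whr_root : forall M N, whr (App (Lam M) N) (subst 0 N M)
| whr_app : forall M M' N, whr M M' -> whr (App M N) (App M' N).

Inductive std : term -> term -> Prop :=
| std_whr : forall M M', whr M M' -> std M M'
| std_lam : forall M M', std M M' -> std (Lam M) (Lam M').

Inductive wipar : term -> term -> Prop :=
| wipar_var : forall i, wipar (Var i) (Var i)
| wipar_lam : forall T T', par T T' -> wipar (Lam T) (Lam T')
| wipar_app : forall A A' B B', wipar A A' -> par B B' -> wipar (App A B) (App A' B').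

Notation bstar := (clos_refl_trans term beta).
Notation whrs := (clos_refl_trans_1n term whr).

Lemma par_refl : forall M, par M M.
Proof. induction M; constructor; auto. Qed.

Lemma par_lift : forall A A', par A A' -> forall n c, par (lift n c A) (lift n c A').
Proof.
  induction 1; intros; cbn [lift].
  - apply par_refl.
  - constructor; auto.
  - constructor; auto.
  - pose proof (lift_subst A' 0 c B' n) as E. simpl in E. rewrite E.
    apply par_beta; auto.
Qed.

Lemma par_subst : forall A A', par A A' -> forall B B' k, par B B' ->
  par (subst k B A) (subst k B' A').
Proof.
  induction 1; intros U U' k HU; cbn [subst].
  - cmp; try apply par_lift; auto; constructor.
  - constructor; auto.
  - constructor; auto.
  - pose proof (subst_subst A' 0 k U' B') as E. simpl in E. rewrite E.
    apply par_beta; auto.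
Qed.

Lemma whr_lift : forall A A', whr A A' -> forall n c, whr (lift n c A) (lift n c A').
Proof.
  induction 1; intros; cbn [lift].
  - pose proof (lift_subst M 0 c N n) as E. simpl in E. rewrite E. constructor.
  - constructor; auto.
Qed.

Lemma whr_subst : forall A A', whr A A' -> forall B k, whr (subst k B A) (subst k B A').
Proof.
  induction 1; intros U k; cbn [subst].
  - pose proof (subst_subst M 0 k U N) as E. simpl in E. rewrite E. constructor.
  - constructor; auto.
Qed.

Lemma hred_subst : forall A A', hred A A' -> forall B k, hred (subst k B A) (subst k B A').
Proof.
  induction 1; intros U k; cbn [subst].
  - pose proof (subst_subst M 0 k U N) as E. simpl in E. rewrite E. constructor.
  - constructor; auto.
  - constructor; auto.
Qed.

Lemma whrs_lift : forall A A', whrs A A' -> forall n c, whrs (lift n c A) (lift n c A').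
Proof.
  induction 1; intros. constructor. econstructor. apply whr_lift; eauto. auto.
Qed.

Lemma whrs_subst : forall A A', whrs A A' -> forall B k, whrs (subst k B A) (subst k B A').
Proof.
  induction 1; intros U k. constructor. econstructor. apply whr_subst; eauto. auto.
Qed.

Lemma whrs_app : forall A A', whrs A A' -> forall B, whrs (App A B) (App A' B).
Proof.
  induction 1; intros. constructor. econstructor. apply whr_app; eauto. auto.
Qed.

Lemma whrs_trans : forall A B C, whrs A B -> whrs B C -> whrs A C.
Proof.
  induction 1; intros; auto. econstructor; eauto.
Qed.

Lemma wipar_lift : forall A A', wipar A A' -> forall n c, wipar (lift n c A) (lift n c A').
Proof.
  induction 1; intros; cbn [lift].
  - cmp; constructor.
  - constructor; apply par_lift; auto.
  - constructor; auto. apply par_lift; auto.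
Qed.

Definition split_ M N := exists P, whrs M P /\ wipar P N.

Lemma split_subst : forall A0 A', wipar A0 A' -> forall B B' k, split_ B B' -> par B B' ->
  split_ (subst k B A0) (subst k B' A').
Proof.
  induction 1; intros U U' k [U0 [H1 H2]] Hp; cbn [subst].
  - cmp.
    + exists (lift k 0 U0). split. apply whrs_lift; auto. apply wipar_lift; auto.
    + eexists. split. constructor. constructor.
    + eexists. split. constructor. constructor.
  - eexists. split. constructor. constructor. apply par_subst; auto.
  - destruct (IHwipar U U' k) as [P1 [HP1 HP2]]. exists U0; auto. auto.
    exists (App P1 (subst k U B)). split.
    + apply whrs_app; auto.
    + constructor; auto. apply par_subst; auto.
Qed.

Lemma par_split : forall M N, par M N -> split_ M N.
Proof.
  induction 1.
  - eexists; split; constructor.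
  - eexists; split. constructor. constructor; auto.
  - destruct IHpar1 as [P1 [H1 H2]]. exists (App P1 B). split.
    apply whrs_app; auto. constructor; auto.
  - destruct IHpar1 as [A0 [H1 H2]].
    destruct (split_subst A0 A' H2 B B' 0 IHpar2 H0) as [P [HP1 HP2]].
    exists P. split; auto.
    econstructor. apply whr_root.
    eapply whrs_trans. apply whrs_subst; eauto. auto.
Qed.

Lemma par_merge : forall P N, wipar P N -> forall N', whr N N' ->
  exists P', whr P P' /\ par P' N'.
Proof.
  induction 1; intros N' HN.
  - inversion HN.
  - inversion HN.
  - inversion HN; subst.
    + inversion H; subst. exists (subst 0 B T). split. constructor.
      apply par_subst; auto.
    + destruct (IHwipar _ H4) as [P'' [H1 H2]]. exists (App P'' B).
      split. constructor; auto. constructor; auto.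
Qed.

Definition whnf (M : term) : Prop := is_neutral M = true \/ exists T, M = Lam T.

Lemma wipar_whnf : forall P N, wipar P N -> whnf N -> whnf P.
Proof.
  induction 1; intros Hw.
  - left; reflexivity.
  - right; eauto.
  - destruct Hw as [Hn | [T0 HT]]; [|discriminate]. simpl in Hn.
    destruct IHwipar as [Ha|[T0 HT]]. left; auto. left; auto.
    subst A. inversion H; subst. discriminate.
Qed.

Lemma whnf_par : forall M M1 P1, par M M1 -> whrs M1 P1 -> whnf P1 ->
  exists P, whrs M P /\ whnf P.
Proof.
  intros M M1 P1 Hp Hs. revert M Hp. induction Hs; intros M0 Hp Hw.
  - destruct (par_split _ _ Hp) as [P [H1 H2]]. exists P. split; auto.
    eapply wipar_whnf; eauto.
  - destruct (par_split _ _ Hp) as [P [H1 H2]].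
    destruct (par_merge _ _ H2 _ H) as [P' [H3 H4]].
    destruct (IHHs P' H4 Hw) as [P'' [H5 H6]].
    exists P''. split; auto. eapply whrs_trans. eauto. econstructor; eauto.
Qed.

Lemma beta_par : forall M N, beta M N -> par M N.
Proof.
  induction 1.
  - apply par_beta; apply par_refl.
  - constructor; auto.
  - constructor; auto using par_refl.
  - constructor; auto using par_refl.
Qed.

Lemma whnf_thm : forall M N, bstar M N -> whnf N -> exists P, whrs M P /\ whnf P.
Proof.
  intros M N H. apply clos_rt_rt1n in H. induction H; intros Hw.
  - exists x. split; auto. constructor.
  - destruct (IHclos_refl_trans_1n Hw) as [P1 [H1 H2]].
    eapply whnf_par; eauto. apply beta_par; auto.
Qed.

Fixpoint dev (t : term) : term :=
  match t with
  | Var i => Var i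
  | Lam a => Lam (dev a)
  | App a b => match a with
               | Lam a0 => subst 0 (dev b) (dev a0)
               | _ => App (dev a) (dev b)
               end
  end.

Lemma par_dev : forall M N, par M N -> par N (dev M).
Proof.
  induction 1; simpl.
  - constructor.
  - constructor; auto.
  - destruct A.
    + constructor; auto.
    + inversion H; subst. simpl in IHpar1. inversion IHpar1; subst.
      apply par_beta; auto.
    + constructor; auto.
  - apply par_subst; auto.
Qed.

Notation pars := (clos_refl_trans_1n term par).

Lemma strip : forall M N2, pars M N2 -> forall N1, par M N1 ->
  exists Z, pars N1 Z /\ par N2 Z.
Proof.
  induction 1; intros N1 Hp.
  - exists N1. split. constructor. auto.
  - destruct (IHclos_refl_trans_1n (dev x)) as [Z [H1 H2]]. apply par_dev; auto.
    exists Z. split; auto. econstructor. apply par_dev; eauto. auto.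
Qed.

Lemma pars_confl : forall M N1, pars M N1 -> forall N2, pars M N2 ->
  exists Z, pars N1 Z /\ pars N2 Z.
Proof.
  induction 1; intros N2 H2.
  - exists N2. split; auto. constructor.
  - destruct (strip _ _ H2 _ H) as [W [HW1 HW2]].
    destruct (IHclos_refl_trans_1n _ HW1) as [Z [HZ1 HZ2]].
    exists Z. split; auto. econstructor; eauto.
Qed.

Lemma bstar_lam : forall A B, bstar A B -> bstar (Lam A) (Lam B).
Proof. induction 1. constructor; constructor; auto. constructor 2. econstructor 3; eauto. Qed.
Lemma bstar_appl : forall A B C, bstar A B -> bstar (App A C) (App B C).
Proof. induction 1. constructor; constructor; auto. constructor 2. econstructor 3; eauto. Qed.
Lemma bstar_appr : forall A B C, bstar A B -> bstar (App C A) (App C B).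
Proof. induction 1. constructor; constructor; auto. constructor 2. econstructor 3; eauto. Qed.
Lemma bstar_trans : forall A B C, bstar A B -> bstar B C -> bstar A C.
Proof. intros; econstructor 3; eauto. Qed.
Lemma bstar_step : forall A B, beta A B -> bstar A B.
Proof. intros; constructor; auto. Qed.
Lemma bstar_refl : forall A, bstar A A.
Proof. intros; constructor 2. Qed.

Lemma par_bstar : forall M N, par M N -> bstar M N.
Proof.
  induction 1.
  - apply bstar_refl.
  - apply bstar_lam; auto.
  - eapply bstar_trans. apply bstar_appl; eauto. apply bstar_appr; auto.
  - eapply bstar_trans. apply bstar_appl. apply bstar_lam; eauto.
    eapply bstar_trans. apply bstar_appr; eauto. apply bstar_step. constructor.
Qed.

Lemma pars_bstar : forall M N, pars M N -> bstar M N.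
Proof. induction 1. apply bstar_refl. eapply bstar_trans; eauto using par_bstar. Qed.

Lemma bstar_pars : forall M N, bstar M N -> pars M N.
Proof.
  intros M N H. apply clos_rt_rt1n in H. induction H. constructor.
  econstructor; eauto. apply beta_par; auto.
Qed.

Lemma confluence : forall M N1 N2, bstar M N1 -> bstar M N2 ->
  exists Z, bstar N1 Z /\ bstar N2 Z.
Proof.
  intros. destruct (pars_confl M N1 (bstar_pars _ _ H) N2 (bstar_pars _ _ H0)) as [Z [H1 H2]].
  exists Z; split; apply pars_bstar; auto.
Qed.

Lemma whr_beta : forall M N, whr M N -> beta M N.
Proof. induction 1; constructor; auto. Qed.
Lemma whrs_bstar : forall M N, whrs M N -> bstar M N.
Proof. induction 1. apply bstar_refl. eapply bstar_trans; eauto using bstar_step, whr_beta. Qed.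
Lemma hred_beta : forall M N, hred M N -> beta M N.
Proof. induction 1; constructor; auto. Qed.

Lemma neutral_hnf : forall M, is_neutral M = true -> is_hnf M = true.
Proof. destruct M; simpl; auto; discriminate. Qed.

Lemma beta_neutral : forall M M', beta M M' -> is_neutral M = true -> is_neutral M' = true.
Proof. induction 1; simpl; auto; discriminate. Qed.

Lemma beta_hnf : forall M M', beta M M' -> is_hnf M = true -> is_hnf M' = true.
Proof.
  induction 1; simpl; auto; try discriminate.
  intros. eapply beta_neutral; eauto.
Qed.

Lemma bstar_neutral : forall M M', bstar M M' -> is_neutral M = true -> is_neutral M' = true.
Proof. induction 1; eauto using beta_neutral. Qed.
Lemma bstar_hnf : forall M M', bstar M M' -> is_hnf M = true -> is_hnf M' = true.
Proof. induction 1; eauto using beta_hnf. Qed.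

Lemma bstar_var_inv : forall M Z, bstar M Z -> forall x, M = Var x -> Z = Var x.
Proof.
  induction 1; intros; subst; try solve [inversion H]; auto.
Qed.

Lemma bstar_lam_inv : forall M Z, bstar M Z -> forall A, M = Lam A ->
  exists Z', Z = Lam Z' /\ bstar A Z'.
Proof.
  induction 1; intros; subst.
  - inversion H; subst. eexists; split; eauto. apply bstar_step; auto.
  - eexists; split; eauto. apply bstar_refl.
  - destruct (IHclos_refl_trans1 A eq_refl) as [Y [HY1 HY2]].
    destruct (IHclos_refl_trans2 Y HY1) as [Z' [HZ1 HZ2]].
    exists Z'. split; auto. eapply bstar_trans; eauto.
Qed.

Lemma bstar_app_inv : forall M Z, bstar M Z -> forall A B, M = App A B -> is_neutral A = true ->
  exists Z1 Z2, Z = App Z1 Z2 /\ bstar A Z1 /\ bstar B Z2 /\ is_neutral Z1 = true.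
Proof.
  induction 1; intros A B E HA; subst.
  - inversion H; subst.
    + discriminate.
    + do 2 eexists; repeat split; eauto using bstar_step, bstar_refl, beta_neutral.
    + do 2 eexists; repeat split; eauto using bstar_step, bstar_refl, beta_neutral.
  - do 2 eexists; repeat split; eauto using bstar_refl.
  - destruct (IHclos_refl_trans1 A B eq_refl HA) as [Y1 [Y2 [HY [H1' [H2' H3']]]]].
    destruct (IHclos_refl_trans2 Y1 Y2 HY H3') as [Z1 [Z2 [HZ [H4 [H5 H6]]]]].
    exists Z1, Z2. repeat split; eauto using bstar_trans.
Qed.

Lemma bstar_lam_not_neutral : forall A Z, bstar (Lam A) Z -> is_neutral Z = true -> False.
Proof.
  intros. destruct (bstar_lam_inv _ _ H A eq_refl) as [Z' [E _]]. subst. discriminate.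
Qed.

Notation stds := (clos_refl_trans_1n term std).

Lemma whrs_stds : forall M N, whrs M N -> stds M N.
Proof. induction 1. constructor. econstructor. apply std_whr; eauto. auto. Qed.
Lemma stds_lam : forall M N, stds M N -> stds (Lam M) (Lam N).
Proof. induction 1. constructor. econstructor. apply std_lam; eauto. auto. Qed.
Lemma stds_trans : forall A B C, stds A B -> stds B C -> stds A C.
Proof. induction 1; intros; auto. econstructor; eauto. Qed.

Lemma HN_neutral : forall M Z, bstar M Z -> is_neutral Z = true ->
  exists H, stds M H /\ is_hnf H = true.
Proof.
  intros M Z HMZ HZ.
  destruct (whnf_thm M Z HMZ (or_introl HZ)) as [P [HP1 [HP2 | [T HT]]]].
  - exists P. split. apply whrs_stds; auto. apply neutral_hnf; auto.
  - subst. exfalso.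
    destruct (confluence M (Lam T) Z (whrs_bstar _ _ HP1) HMZ) as [W [HW1 HW2]].
    apply (bstar_lam_not_neutral T W); auto. eapply bstar_neutral; eauto.
Qed.

Lemma HN : forall N, is_hnf N = true -> forall M Z, bstar M Z -> bstar N Z ->
  exists H, stds M H /\ is_hnf H = true.
Proof.
  induction N as [x|N IHN|N1 IHN1 N2 IHN2]; intros HN M Z HMZ HNZ.
  - apply (HN_neutral M Z HMZ). rewrite (bstar_var_inv _ _ HNZ x eq_refl). reflexivity.
  - simpl in HN. destruct (bstar_lam_inv _ _ HNZ N eq_refl) as [Z' [E HZ']]. subst Z.
    destruct (whnf_thm M (Lam Z') HMZ (or_intror (ex_intro _ Z' eq_refl))) as [P [HP1 [HP2 | [T HT]]]].
    + exfalso.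
      destruct (confluence M P (Lam Z') (whrs_bstar _ _ HP1) HMZ) as [W [HW1 HW2]].
      apply (bstar_lam_not_neutral Z' W HW2). exact (bstar_neutral _ _ HW1 HP2).
    + subst P.
      destruct (confluence M (Lam T) (Lam Z') (whrs_bstar _ _ HP1) HMZ) as [W [HW1 HW2]].
      destruct (bstar_lam_inv _ _ HW1 T eq_refl) as [W' [EW HTW]]. subst W.
      destruct (bstar_lam_inv _ _ HW2 Z' eq_refl) as [W'' [EW HZW]]. injection EW as EW; subst W''.
      destruct (IHN HN T W' HTW (bstar_trans _ _ _ HZ' HZW)) as [H' [HH1 HH2]].
      exists (Lam H'). split; auto.
      eapply stds_trans. apply whrs_stds; eauto. apply stds_lam; auto.
  - simpl in HN.
    destruct (bstar_app_inv _ _ HNZ N1 N2 eq_refl HN) as [Z1 [Z2 [E [_ [_ HZ1]]]]]. subst Z.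
    apply (HN_neutral M _ HMZ). simpl. auto.
Qed.

Lemma hnf_no_hred : forall M M', hred M M' -> is_hnf M = true -> False.
Proof.
  induction 1; simpl; intros.
  - discriminate.
  - auto.
  - apply IHhred. apply neutral_hnf; auto.
Qed.

Lemma not_hnf_hred : forall M, is_hnf M = false -> exists M', hred M M'.
Proof.
  induction M as [x|M IH|M1 IH1 M2 IH2]; simpl; intros H.
  - discriminate.
  - destruct (IH H) as [M' HM]. eexists; constructor; eauto.
  - destruct M1 as [y|A|A1 A2].
    + discriminate.
    + eexists; constructor.
    + destruct (IH1 H) as [M' HM]. eexists; apply hred_appl; eauto.
Qed.

Lemma whr_det : forall M M1, whr M M1 -> forall M2, whr M M2 -> M1 = M2.
Proof.
  induction 1; intros M2 H2; inversion H2; subst; auto.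
  - inversion H3.
  - inversion H.
  - f_equal; auto.
Qed.

Lemma hred_app_lam : forall X Y T, hred (App X Y) (Lam T) -> whr (App X Y) (Lam T).
Proof. intros. inversion H; subst. apply whr_root. Qed.

Ltac kill_whr_lam := match goal with Hw : whr (Lam _) _ |- _ => inversion Hw | Hw : whr (Var _) _ |- _ => inversion Hw end.

Lemma commute : forall M M', hred M M' -> forall M1, std M M1 ->
  M' = M1 \/ exists M'1, std M' M'1 /\ hred M1 M'1.
Proof.
  induction 1; intros M1 HS.
  - inversion HS; subst. inversion H; subst. left; reflexivity. kill_whr_lam.
  - inversion HS; subst.
    + kill_whr_lam.
    + match goal with HSS : std M _ |- _ => destruct (IHhred _ HSS) as [E | [M'1 [H2 H3]]] end.
      * left; subst; auto.
      * right. exists (Lam M'1). split. apply std_lam; auto. apply hred_lam; auto.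
  - inversion HS as [? ? HW|]; subst. inversion HW as [A0 ?|? A1 ? HW1]; subst.
    + inversion H as [| ? A0' HA0 |]; subst. right. exists (subst 0 N A0'). split.
      apply std_whr; constructor. apply hred_subst; auto.
    + destruct (IHhred A1 (std_whr _ _ HW1)) as [E | [M'2 [H2 H3]]].
      * left; subst; auto.
      * destruct M' as [y|T|B1 B2].
        -- inversion H2 as [? ? HW2|]; subst. inversion HW2.
        -- left. assert (HW' : whr M (Lam T)).
           { inversion HW1; subst; apply hred_app_lam; auto. }
           rewrite (whr_det _ _ HW' _ HW1). reflexivity.
        -- right. exists (App M'2 N). split.
           inversion H2; subst. apply std_whr; constructor; auto.
           apply hred_appl; auto.
Qed.

Inductive stdn : nat -> term -> term -> Prop :=
| stdn0 : forall M, stdn 0 M M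
| stdnS : forall n M M1 M2, std M M1 -> stdn n M1 M2 -> stdn (S n) M M2.

Lemma stds_stdn : forall M N, stds M N -> exists n, stdn n M N.
Proof.
  induction 1. exists 0; constructor. destruct IHclos_refl_trans_1n as [n Hn].
  exists (S n); econstructor; eauto.
Qed.

Lemma measure : forall n M H, stdn n M H -> is_hnf H = true -> forall M', hred M M' ->
  exists n', n = S n' /\ exists H', stdn n' M' H' /\ is_hnf H' = true.
Proof.
  induction 1; intros HH M' HM.
  - exfalso; eapply hnf_no_hred; eauto.
  - destruct (commute _ _ HM _ H) as [E | [M'1 [H2 H3]]].
    + subst. exists n. split; auto. eauto.
    + destruct (IHstdn HH _ H3) as [n' [E [H' [H4 H5]]]].
      exists n. split; auto. exists H'. split; auto. subst. econstructor; eauto.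
Qed.

Lemma pd_bstar : forall M N, pd M N -> bstar M N.
Proof.
  induction 1.
  - apply bstar_step, hred_beta; auto.
  - apply bstar_refl.
  - apply bstar_lam; auto.
  - eapply bstar_trans. apply bstar_appl; eauto. apply bstar_appr; auto.
Qed.

Lemma pd_total : forall M, exists N, pd M N.
Proof.
  induction M as [x|M IH|M1 IH1 M2 IH2].
  - exists (Var x). apply pd_nf. intros [N HN]. inversion HN.
  - destruct (classic (exists N, hred (Lam M) N)) as [[N HN]|Hh].
    + exists N; apply pd_head; auto.
    + destruct (classic (normal beta (Lam M))) as [Hb|Hb].
      * exists (Lam M); apply pd_nf; auto.
      * destruct IH as [M' HM']. exists (Lam M'). apply pd_lam; auto.
  - destruct (classic (exists N, hred (App M1 M2) N)) as [[N HN]|Hh].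
    + exists N; apply pd_head; auto.
    + destruct (classic (normal beta (App M1 M2))) as [Hb|Hb].
      * exists (App M1 M2); apply pd_nf; auto.
      * destruct IH1 as [M1' H1]. destruct IH2 as [M2' H2].
        exists (App M1' M2'). apply pd_app; auto.
Qed.

Lemma pd_nonhnf : forall M M', is_hnf M = false -> pd M M' -> hred M M'.
Proof.
  intros M M' Hn Hp. destruct (not_hnf_hred M Hn) as [X HX].
  inversion Hp; subst; auto.
  - exfalso. apply H. exists X. apply hred_beta; auto.
  - exfalso. apply H. eauto.
  - exfalso. apply H. eauto.
Qed.

Lemma pd_lam_inv : forall A B, is_hnf (Lam A) = true -> pd (Lam A) (Lam B) -> pd A B.
Proof.
  intros A B Hh Hp. inversion Hp; subst.
  - exfalso; eapply hnf_no_hred; eauto.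
  - apply pd_nf. intros [N HN]. match goal with Hn : normal beta _ |- _ => apply Hn end.
    exists (Lam N). constructor; auto.
  - auto.
Qed.

Lemma pd_app_inv : forall A B A' B', is_neutral A = true -> pd (App A B) (App A' B') ->
  pd A A' /\ pd B B'.
Proof.
  intros A B A' B' Hn Hp. inversion Hp; subst.
  - exfalso; eapply hnf_no_hred; eauto.
  - split; apply pd_nf; intros [N HN]; match goal with Hn : normal beta _ |- _ => apply Hn end.
    exists (App N B'); constructor; auto. exists (App A' N); constructor; auto.
  - auto.
Qed.

Definition pdseq (f : nat -> term) := forall k, pd (f k) (f (S k)).

Lemma seq_bstar : forall f, pdseq f -> forall i n, bstar (f i) (f (i + n)).
Proof.
  intros f Hf i n. induction n.
  - rewrite Nat.add_0_r. apply bstar_refl.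
  - eapply bstar_trans. eauto. rewrite Nat.add_succ_r. apply pd_bstar. apply Hf.
Qed.

Lemma shift_seq : forall f j, pdseq f -> pdseq (fun k => f (j + k)).
Proof. intros f j Hf k. simpl. rewrite Nat.add_succ_r. apply Hf. Qed.

Lemma reach_stdn : forall n M H, stdn n M H -> is_hnf H = true ->
  forall f, f 0 = M -> pdseq f -> exists j, is_hnf (f j) = true.
Proof.
  induction n; intros M H Hs HH f E Hf.
  - inversion Hs; subst. exists 0; auto.
  - destruct (is_hnf (f 0)) eqn:Eh. exists 0; auto.
    assert (Hr : hred (f 0) (f 1)) by (apply pd_nonhnf; auto).
    rewrite E in Hr.
    destruct (measure _ _ _ Hs HH _ Hr) as [n' [En [H' [H1 H2]]]].
    injection En as En; subst n'.
    destruct (IHn _ _ H1 H2 (fun k => f (S k)) eq_refl) as [j Hj].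
    intros k. apply Hf.
    exists (S j); auto.
Qed.

Lemma reach : forall f N, pdseq f -> bstar (f 0) N -> is_hnf N = true ->
  exists j, is_hnf (f j) = true.
Proof.
  intros f N Hf HfN Hh.
  destruct (HN N Hh (f 0) N HfN (bstar_refl N)) as [H [HH1 HH2]].
  destruct (stds_stdn _ _ HH1) as [n Hn].
  eapply reach_stdn; eauto.
Qed.

Inductive sle : pterm -> pterm -> Prop :=
| sle_om : forall P, sle POmega P
| sle_var : forall x, sle (PVar x) (PVar x)
| sle_app : forall P1 P2 Q1 Q2, sle P1 Q1 -> sle P2 Q2 -> sle (PApp P1 P2) (PApp Q1 Q2)
| sle_lam : forall P Q, sle P Q -> sle (PLam P) (PLam Q).

Lemma sle_refl : forall P, sle P P.
Proof. induction P; constructor; auto. Qed.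

Lemma sle_trans : forall P Q, sle P Q -> forall S, sle Q S -> sle P S.
Proof.
  induction 1; intros S HS.
  - constructor.
  - auto.
  - inversion HS; subst. constructor; auto.
  - inversion HS; subst. constructor; auto.
Qed.

Lemma ple_sle : forall P Q, ple P Q -> sle P Q.
Proof.
  induction 1.
  - apply sle_refl.
  - eapply sle_trans; eauto.
  - constructor.
  - constructor; auto.
  - constructor; auto.
Qed.

Lemma sle_ple : forall P Q, sle P Q -> ple P Q.
Proof.
  induction 1.
  - apply ple_omega.
  - apply ple_refl.
  - apply ple_app; auto.
  - apply ple_lam; auto.
Qed.

Lemma omega_mono : forall M M', beta M M' -> sle (omega M) (omega M').
Proof.
  induction 1; simpl.
  - constructor.
  - destruct (is_hnf M) eqn:E.
    + rewrite (beta_hnf _ _ H E). constructor; auto.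
    + constructor.
  - destruct (is_neutral M) eqn:E.
    + rewrite (beta_neutral _ _ H E). constructor; auto. apply sle_refl.
    + constructor.
  - destruct (is_neutral M) eqn:E.
    + constructor; auto. apply sle_refl.
    + constructor.
Qed.

Lemma omega_star : forall M M', bstar M M' -> forall Q, sle Q (omega M) -> sle Q (omega M').
Proof.
  induction 1; intros Q HQ; auto.
  eapply sle_trans; eauto using omega_mono.
Qed.

Lemma omega_var_inv : forall N x, omega N = PVar x -> N = Var x.
Proof.
  destruct N; simpl; intros.
  - congruence.
  - destruct (is_hnf N); discriminate.
  - destruct (is_neutral N1); discriminate.
Qed.

Lemma omega_lam_inv : forall N X, omega N = PLam X ->
  exists N', N = Lam N' /\ is_hnf N' = true /\ X = omega N'.
Proof.
  destruct N; simpl; intros.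
  - discriminate.
  - destruct (is_hnf N) eqn:E; try discriminate. injection H as H; subst. eauto.
  - destruct (is_neutral N1); discriminate.
Qed.

Lemma omega_app_inv : forall N X1 X2, omega N = PApp X1 X2 ->
  exists N1 N2, N = App N1 N2 /\ is_neutral N1 = true /\ X1 = omega N1 /\ X2 = omega N2.
Proof.
  destruct N; simpl; intros.
  - discriminate.
  - destruct (is_hnf N); discriminate.
  - destruct (is_neutral N1) eqn:E; try discriminate. injection H as H1 H2; subst. eauto 7.
Qed.

Lemma KL : forall Q f N, pdseq f -> bstar (f 0) N -> sle Q (omega N) ->
  exists n, sle Q (omega (f n)).
Proof.
  induction Q as [|x|Q1 IH1 Q2 IH2|Q IH]; intros f N Hf HN HQ.
  - exists 0. constructor.
  - remember (omega N) as ON eqn:E. inversion HQ; subst.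
    match goal with Hx : _ = omega N |- _ => rename Hx into E end.
    apply eq_sym, omega_var_inv in E. subst N.
    destruct (reach f (Var x) Hf HN eq_refl) as [j Hj].
    destruct (confluence (f 0) (f j) (Var x) (seq_bstar f Hf 0 j) HN) as [Z [HZ1 HZ2]].
    rewrite (bstar_var_inv _ _ HZ2 x eq_refl) in HZ1.
    exists j. destruct (f j) as [y|T|A B] eqn:Ej.
    + pose proof (bstar_var_inv _ _ HZ1 y eq_refl) as Ey. injection Ey as Ey. subst. simpl. constructor.
    + destruct (bstar_lam_inv _ _ HZ1 T eq_refl) as [? [E _]]. discriminate.
    + destruct (bstar_app_inv _ _ HZ1 A B eq_refl Hj) as [? [? [E _]]]. discriminate.
  - remember (omega N) as ON eqn:E. inversion HQ as [| | ? ? X1 X2 HQ1 HQ2 |]; subst.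
    match goal with Hx : _ = omega N |- _ => rename Hx into E end.
    apply eq_sym, omega_app_inv in E. destruct E as [N1 [N2 [EN [Hn1 [E1 E2]]]]]. subst.
    assert (HhN : is_hnf (App N1 N2) = true) by (simpl; auto).
    destruct (reach f _ Hf HN HhN) as [j Hj].
    destruct (confluence (f 0) (f j) _ (seq_bstar f Hf 0 j) HN) as [Z [HZ1 HZ2]].
    destruct (bstar_app_inv _ _ HZ2 N1 N2 eq_refl Hn1) as [Z1 [Z2 [EZ [HZa [HZb HZn]]]]].
    subst Z.
    destruct (f j) as [y|T|T1 T2] eqn:Ej.
    + pose proof (bstar_var_inv _ _ HZ1 y eq_refl) as Ey; discriminate.
    + destruct (bstar_lam_inv _ _ HZ1 T eq_refl) as [? [E _]]. discriminate.
    + simpl in Hj.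
      destruct (bstar_app_inv _ _ HZ1 T1 T2 eq_refl Hj) as [Y1 [Y2 [EY [HY1 [HY2 _]]]]].
      injection EY as EY1 EY2; subst Y1 Y2.
      set (h := fun k => f (j + k)).
      assert (Hh : pdseq h) by (apply shift_seq; auto).
      assert (Hshape : forall k, exists a b, h k = App a b /\ is_neutral a = true).
      { intros k. assert (Hb : bstar (f j) (h k)) by apply seq_bstar, Hf.
        rewrite Ej in Hb.
        destruct (bstar_app_inv _ _ Hb T1 T2 eq_refl Hj) as [a [b [E [_ [_ Ha]]]]].
        eauto. }
      set (g1 := fun k => match h k with App a _ => a | t => t end).
      set (g2 := fun k => match h k with App _ b => b | t => t end).
      assert (Hg : forall k, h k = App (g1 k) (g2 k) /\ is_neutral (g1 k) = true).
      { intros k. destruct (Hshape k) as [a [b [E Ha]]]. unfold g1, g2. rewrite E. auto. }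
      assert (Hg1 : pdseq g1 /\ pdseq g2).
      { split; intros k; destruct (Hg k) as [E1 Hn]; destruct (Hg (S k)) as [E2 _];
        pose proof (Hh k) as Hp; rewrite E1, E2 in Hp; apply pd_app_inv in Hp; tauto. }
      destruct Hg1 as [Hg1 Hg2].
      assert (E0 : h 0 = App T1 T2) by (unfold h; rewrite Nat.add_0_r; auto).
      destruct (Hg 0) as [E0' _]. rewrite E0 in E0'. injection E0' as E01 E02.
      assert (B1 : bstar (g1 0) Z1) by (rewrite <- E01; auto).
      assert (B2 : bstar (g2 0) Z2) by (rewrite <- E02; auto).
      destruct (IH1 g1 Z1 Hg1 B1 (omega_star _ _ HZa _ HQ1)) as [n1 Hn1'].
      destruct (IH2 g2 Z2 Hg2 B2 (omega_star _ _ HZb _ HQ2)) as [n2 Hn2'].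
      exists (j + (n1 + n2)).
      change (f (j + (n1 + n2))) with (h (n1 + n2)).
      destruct (Hg (n1 + n2)) as [E Hn]. rewrite E. simpl. rewrite Hn.
      constructor.
      * eapply omega_star. apply seq_bstar; auto. auto.
      * rewrite Nat.add_comm. eapply omega_star. apply seq_bstar; auto. auto.
  - remember (omega N) as ON eqn:E. inversion HQ as [| | | ? X HQ']; subst.
    match goal with Hx : _ = omega N |- _ => rename Hx into E end.
    apply eq_sym, omega_lam_inv in E. destruct E as [N' [EN [HhN' EX]]]. subst.
    assert (HhN : is_hnf (Lam N') = true) by (simpl; auto).
    destruct (reach f _ Hf HN HhN) as [j Hj].
    destruct (confluence (f 0) (f j) _ (seq_bstar f Hf 0 j) HN) as [Z [HZ1 HZ2]].
    destruct (bstar_lam_inv _ _ HZ2 N' eq_refl) as [Z' [EZ HZ']]. subst Z.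
    destruct (f j) as [y|T|T1 T2] eqn:Ej.
    + pose proof (bstar_var_inv _ _ HZ1 y eq_refl) as Ey; discriminate.
    + destruct (bstar_lam_inv _ _ HZ1 T eq_refl) as [Y [EY HY]].
      injection EY as EY; subst Y.
      set (h := fun k => f (j + k)).
      assert (Hh : pdseq h) by (apply shift_seq; auto).
      assert (Hshape : forall k, exists b, h k = Lam b /\ is_hnf b = true).
      { intros k. assert (Hb : bstar (f j) (h k)) by apply seq_bstar, Hf.
        rewrite Ej in Hb.
        pose proof (bstar_hnf _ _ Hb Hj) as Hhk.
        destruct (bstar_lam_inv _ _ Hb T eq_refl) as [b [E _]].
        rewrite E in Hhk. eauto. }
      set (g := fun k => match h k with Lam b => b | t => t end).
      assert (Hg : forall k, h k = Lam (g k) /\ is_hnf (g k) = true).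
      { intros k. destruct (Hshape k) as [b [E Ha]]. unfold g. rewrite E. auto. }
      assert (Hg1 : pdseq g).
      { intros k; destruct (Hg k) as [E1 Hn]; destruct (Hg (S k)) as [E2 _].
        pose proof (Hh k) as Hp; rewrite E1, E2 in Hp. apply pd_lam_inv in Hp; auto. }
      assert (E0 : h 0 = Lam T) by (unfold h; rewrite Nat.add_0_r; auto).
      destruct (Hg 0) as [E0' _]. rewrite E0 in E0'. injection E0' as E01.
      assert (B1 : bstar (g 0) Z') by (rewrite <- E01; auto).
      destruct (IH g Z' Hg1 B1 (omega_star _ _ HZ' _ HQ')) as [n Hn'].
      exists (j + n).
      change (f (j + n)) with (h n).
      destruct (Hg n) as [E Hn]. rewrite E. simpl. rewrite Hn.
      constructor. auto.
    + simpl in Hj.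
      destruct (bstar_app_inv _ _ HZ1 T1 T2 eq_refl Hj) as [? [? [E _]]]. discriminate.
Qed.

Lemma maxseq_pdseq : forall M f, max_seq pd M f -> pdseq f.
Proof.
  intros M f [_ Hf] k. destruct (Hf k) as [H | [Hn _]]; auto.
  exfalso. apply Hn. apply pd_total.
Qed.

Lemma maxseq_beta_bstar : forall M f, max_seq beta M f -> forall n, bstar M (f n).
Proof.
  intros M f [H0 Hf] n. induction n.
  - rewrite H0. apply bstar_refl.
  - destruct (Hf n) as [H | [_ E]].
    + eapply bstar_trans; eauto. apply bstar_step; auto.
    + rewrite E; auto.
Qed.

Lemma lim_char : forall M f, max_seq pd M f -> forall Q, BT M Q <-> exists n, obs (f n) Q.
Proof.
  intros M f Hm Q. pose proof (maxseq_pdseq _ _ Hm) as Hf. destruct Hm as [H0 _].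
  split.
  - intros [N [HMN [Hp Hl]]].
    rewrite <- H0 in HMN.
    destruct (KL Q f N Hf HMN (ple_sle _ _ Hl)) as [n Hn].
    exists n. split; auto. apply sle_ple; auto.
  - intros [n [Hp Hl]]. exists (f n). split; auto.
    rewrite <- H0. apply (seq_bstar f Hf 0 n).
Qed.

Theorem mainTheorem18 :
  multistep_strategy pd beta /\
  obs_normalizing pd beta /\
  (forall M : term, obs_lim pd M (BT M)).
Proof.
  assert (Hex : forall M : term, obs_lim pd M (BT M)).
  { intros M.
    set (g := fun t => proj1_sig (constructive_indefinite_description _ (pd_total t))).
    assert (Hg : forall t, pd t (g t)).
    { intros t. unfold g. exact (proj2_sig (constructive_indefinite_description _ (pd_total t))). }
    set (f := fun n => Nat.iter n g M).
    assert (Hm : max_seq pd M f).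
    { split. reflexivity. intros n. left. simpl. apply Hg. }
    exists f. split; auto. apply lim_char; auto. }
  split; [|split; [split|]]; auto.
  - intros M N H. apply pd_bstar; auto.
  - intros M q [f [Hf Hq]]. exists (BT M). split; auto.
    intros Q HQ. apply Hq in HQ. destruct HQ as [n [Hp Hl]].
    exists (f n). split; auto. eapply maxseq_beta_bstar; eauto.
  - intros M p [f [Hf Hp]] r [g [Hg Hr]] _ Q HQ.
    apply Hp. apply (lim_char M f Hf). apply (lim_char M g Hg). apply Hr; auto.
Qed.
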